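(* Let $\mu$ be a probability distribution on $(E,\mathscr{E})$. Let $\xi:E\to E$ be a measurable involution with $\mu\circ\xi^{-1}=\mu$, so that $Qf=f\circ\xi$ defines an isometric involution of $L^{2}(\mu)$. Assume: (1) $\psi:E\to E$ is a measurable bijection with $\psi^{-1}=\xi\circ\psi\circ\xi$; (2) $\phi:\mathbb{R}_{+}\to[0,1]$ satisfies $r\phi(r^{-1})=\phi(r)$ for $r>0$ and $\phi(0)=0$; (3) with $\nu:=\mu+\mu^{\xi\circ\psi}$, define for $z\in E$, $r(z):=\frac{{\rm d}\mu^{\xi\circ\psi}/{\rm d}\nu(z)}{{\rm d}\mu/{\rm d}\nu(z)}$ if both ${\rm d}\mu^{\xi\circ\psi}/{\rm d}\nu(z)>0$ and ${\rm d}\mu/{\rm d}\nu(z)>0$, and $r(z):=0$ otherwise. Then the Markov kernel \[P(z,{\rm d}z'):=\phi\circ r(z)\,\delta_{\psi(z)}({\rm d}z')+\big[1-\phi\circ r(z)\big]\delta_{\xi(z)}({\rm d}z')\] is $(\mu,Q)$-reversible.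
   Context: For a measurable $\varphi:E\to E$, $\mu^{\varphi}(A):=\mu(\varphi^{-1}(A))$. $\langle f,g\rangle_{\mu}=\int fg\,{\rm d}\mu$. A Markov kernel $P$ is $(\mu,Q)$-reversible if $\langle Pf,g\rangle_{\mu}=\langle f,QPQg\rangle_{\mu}$ for all $f,g\in L^{2}(\mu)$. *)

(* Defs.v *)
From HB Require Import structures.
From mathcomp Require Import all_boot all_order all_algebra.
From mathcomp Require Import all_classical all_reals all_analysis.
Set Implicit Arguments. Unset Strict Implicit. Unset Printing Implicit Defensive.
Import Order.TTheory GRing.Theory Num.Theory.
Local Open Scope classical_set_scope.
Local Open Scope ring_scope.

Section defs.
Context d (E : measurableType d) (R : realType).

Definition nu_sum (mu : set E -> \bar R) (xi psi : E -> E) : set E -> \bar R :=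
  fun A => (mu A + pushforward mu (xi \o psi) A)%E.

Definition is_RN_density (m n : set E -> \bar R) (h : E -> R) : Prop :=
  measurable_fun setT h /\ (forall z, 0 <= h z) /\
  forall A, measurable A -> m A = (\int[n]_(z in A) (h z)%:E)%E.

(* r(z) := h2 z / h1 z if h2 z > 0 and h1 z > 0, and 0 otherwise,
   with h1 = d mu / d nu and h2 = d mu^{xi o psi} / d nu *)
Definition ratio_r (h1 h2 : E -> R) : E -> R :=
  fun z => if (0 < h2 z) && (0 < h1 z) then h2 z / h1 z else 0.

(* action of the Markov kernel
   P(z,dz') = phi(r z) delta_{psi z}(dz') + (1 - phi(r z)) delta_{xi z}(dz')
   on a function f:  (P f)(z) = \int P(z,dz') f(z') *)
Definition kernelP (phi : R -> R) (r : E -> R) (psi xi : E -> E)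
  (f : E -> R) : E -> R :=
  fun z => phi (r z) * f (psi z) + (1 - phi (r z)) * f (xi z).

Definition Qop (xi : E -> E) (f : E -> R) : E -> R := f \o xi.

Definition L2 (mu : set E -> \bar R) (f : E -> R) : Prop :=
  measurable_fun setT f /\ mu.-integrable setT (fun z => ((f z) ^+ 2)%:E).

Definition inner (mu : set E -> \bar R) (f g : E -> R) : \bar R :=
  (\int[mu]_z (f z * g z)%:E)%E.

Definition muQ_reversible (mu : set E -> \bar R) (Pop Q : (E -> R) -> (E -> R)) :=
  forall f g, L2 mu f -> L2 mu g ->
    inner mu (Pop f) g = inner mu f (Q (Pop (Q g))).
End defs.

(* Main.v *)
Require Import Defs.
From HB Require Import structures.
From mathcomp Require Import all_boot all_order all_algebra.
From mathcomp Require Import all_classical all_reals all_analysis.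
From mathcomp Require Import measurable_realfun ring lra.
Import Order.TTheory GRing.Theory Num.Theory.
Local Open Scope classical_set_scope.
Local Open Scope ring_scope.

Lemma measurable_invR (R : realType) : measurable_fun [set: R] (@GRing.inv R).
Proof.
have -> : @GRing.inv R = fun x => if x == 0 then 0 else x^-1.
  by apply: funext => x; case: eqP => // ->; rewrite invr0.
apply: measurable_fun_if => //.
- exact: measurable_fun_eqr.
- have -> : [set: R] `&` (fun x => x == 0) @^-1` [set false] = [set x | x != 0].
    by apply/seteqP; split => x /=; [case => _ /negbT|move=> /negbTE ->].
  apply: open_continuous_measurable_fun; first exact: open_neq.
  by move=> x; rewrite inE => /inv_continuous.
Qed.
Section density.
Context d (T : measurableType d) (R : realType) (mu nu : {measure set T -> \bar R}) (h0 : T -> R).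
Hypotheses (mh0 : measurable_fun setT h0) (h0ge0 : forall x, 0 <= h0 x)
  (h0int : forall A, measurable A -> nu A = (\int[mu]_(x in A) (h0 x)%:E)%E).
Local Open Scope ereal_scope.
Import HBNNSimple.

Lemma density_cov f E : (forall x, 0 <= f x) ->
    measurable E -> measurable_fun E f ->
  \int[mu]_(x in E) (f x * (h0 x)%:E) = \int[nu]_(x in E) f x.
Proof.
move=> f0 mE mf; set g := fun x => (h0 x)%:E.
have mg : measurable_fun E g by apply/measurable_EFinP; exact: measurable_funS mh0.
have g0 x : 0 <= g x by rewrite lee_fin.
pose h := nnsfun_approx mE mf.
have -> : \int[nu]_(x in E) f x =
    lim (\int[nu]_(x in E) (EFin \o h n) x @[n --> \oo]).
  have fE x : E x -> f x = lim ((EFin \o h n) x @[n --> \oo]).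
    by move=> Ex; apply/esym/cvg_lim => //; exact: cvg_nnsfun_approx.
  under eq_integral => x /[!inE] /fE -> //.
  apply: monotone_convergence => //.
  - move=> n; apply/measurable_EFinP.
    by apply: (measurable_funS measurableT) => //; exact/measurable_funP.
  - by move=> n x Ex //=; rewrite lee_fin.
  - by move=> x Ex a b ab; rewrite lee_fin; exact/lefP/nd_nnsfun_approx.
have -> : \int[mu]_(x in E) (f \* g) x =
    lim (\int[mu]_(x in E) ((EFin \o h n) \* g) x @[n --> \oo]).
  have fg x : E x -> f x * g x = lim (((EFin \o h n) \* g) x @[n --> \oo]).
    by move=> Ex; apply/esym/cvg_lim => //; apply: cvgeZr;
      [by []|exact: cvg_nnsfun_approx].
  under eq_integral => x /[!inE] /fg -> //.
  apply: monotone_convergence => [//| | |].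
  - move=> n; apply/emeasurable_funM => //; apply/measurable_funTS.
      exact/measurable_EFinP.
  - by move=> n x Ex /=; rewrite mule_ge0 ?lee_fin.
  - by move=> x Ex a b ab/=; rewrite lee_wpmul2r ?lee_fin//; exact/lefP/nd_nnsfun_approx.
suff suf n : \int[mu]_(x in E) ((EFin \o h n) x * g x) =
    \int[nu]_(x in E) (EFin \o h n) x.
  by under eq_fun do rewrite suf.
transitivity (\int[nu]_(x in E)
   (\sum_(y \in range (h n)) (y * \1_(h n @^-1` [set y]) x)%:E)); last first.
  by apply: eq_integral => t tE; rewrite /= fimfunE -fsumEFin.
have indich m r : measurable_fun E (fun x => (r * \1_(h m @^-1` [set r]) x)%:E).
  by apply: (measurable_comp measurableT) => //; exact: measurable_funM.
rewrite ge0_integral_fsum//; last by move=> m y Ey; exact: nnfun_muleindic_ge0.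
transitivity (\int[mu]_(x in E) (\sum_(y \in range (h n))
    (y * \1_(h n @^-1` [set y]) x)%:E * g x)).
  under [RHS]eq_integral => x xE.
    rewrite -ge0_mule_fsuml => [|y]; last exact: nnfun_muleindic_ge0.
    rewrite fsumEFin // -(fimfunE _ x); over.
  by [].
rewrite ge0_integral_fsum//; last 2 first.
  - by move=> y; apply: emeasurable_funM => //.
  - by move=> m y Ey; rewrite mule_ge0 ?nnfun_muleindic_ge0.
apply: eq_fsbigr => r rhn.
under [RHS]eq_integral do rewrite EFinM.
rewrite integralZl_indic_nnsfun => //.
under eq_integral do rewrite EFinM -muleA.
rewrite ge0_integralZl//.
- under eq_integral do rewrite muleC.
  rewrite (eq_integral (g \_ (h n @^-1` [set r]))); last first.
    by move=> x xE; rewrite epatch_indic.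
  by rewrite -integral_mkcondr -h0int// integral_indic// setIC.
- apply: emeasurable_funM => //; exact/measurable_EFinP.
- by move=> t Et; rewrite mule_ge0 ?lee_fin.
- by move: rhn; rewrite inE => -[t _ <-]; rewrite lee_fin.
Qed.
End density.

Lemma phi_alg (R : realType) (phi : R -> R) (a b : R) :
  (forall x, 0 < x -> x * phi x^-1 = phi x) -> phi 0 = 0 ->
  phi (if (0 < b) && (0 < a) then b / a else 0) * a =
  phi (if (0 < a) && (0 < b) then a / b else 0) * b.
Proof.
move=> phiinv phi0.
have [a0|a0] := ltP 0 a; have [b0|b0] := ltP 0 b => /=; rewrite ?phi0 ?mul0r //.
have := phiinv (b / a); rewrite divr_gt0 // invf_div => /(_ isT) <-.
by field; rewrite gt_eqF.
Qed.

Lemma maxeM (R : realType) (c y : R) : (0 <= c)%R ->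
  maxe (c * y)%:E 0 = (c%:E * maxe y%:E 0)%E.
Proof.
move=> c0; have [y0|y0] := (leP 0%R y).
- by rewrite !max_l ?lee_fin ?mulr_ge0 //.
- rewrite max_r; last by rewrite lee_fin mulr_ge0_le0 // ltW.
  by rewrite max_r ?lee_fin ?ltW // mule0.
Qed.

Lemma maxeNM (R : realType) (c y : R) : (0 <= c)%R ->
  maxe (- (c * y)%:E)%E 0 = (c%:E * maxe (- y%:E) 0)%E.
Proof. by move=> c0; rewrite -!EFinN -mulrN maxeM. Qed.

Lemma bnd1 (R : realType) (a u v : R) : 0 <= a -> a <= 1 -> `|a * u * v| <= a * u ^+ 2 + v ^+ 2.
Proof.
move=> a0 a1.
have h1 : 0 <= a * (u - v) ^+ 2 by rewrite mulr_ge0 ?sqr_ge0.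
have h2 : 0 <= a * (u + v) ^+ 2 by rewrite mulr_ge0 ?sqr_ge0.
have h3 : 0 <= (1 - a) * u ^+ 2 by rewrite mulr_ge0 ?sqr_ge0 ?subr_ge0.
have h4 : 0 <= (1 - a) * v ^+ 2 by rewrite mulr_ge0 ?sqr_ge0 ?subr_ge0.
have h5 : 0 <= (1 - a) * (u - v) ^+ 2 by rewrite mulr_ge0 ?sqr_ge0 ?subr_ge0.
have h6 : 0 <= (1 - a) * (u + v) ^+ 2 by rewrite mulr_ge0 ?sqr_ge0 ?subr_ge0.
rewrite ler_norml; apply/andP; split; nra.
Qed.

Lemma bnd2 (R : realType) (a u v : R) : 0 <= a -> a <= 1 -> `|a * u * v| <= u ^+ 2 + a * v ^+ 2.
Proof.
move=> a0 a1.
have h1 : 0 <= a * (u - v) ^+ 2 by rewrite mulr_ge0 ?sqr_ge0.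
have h2 : 0 <= a * (u + v) ^+ 2 by rewrite mulr_ge0 ?sqr_ge0.
have h3 : 0 <= (1 - a) * u ^+ 2 by rewrite mulr_ge0 ?sqr_ge0 ?subr_ge0.
have h4 : 0 <= (1 - a) * v ^+ 2 by rewrite mulr_ge0 ?sqr_ge0 ?subr_ge0.
have h5 : 0 <= (1 - a) * (u - v) ^+ 2 by rewrite mulr_ge0 ?sqr_ge0 ?subr_ge0.
have h6 : 0 <= (1 - a) * (u + v) ^+ 2 by rewrite mulr_ge0 ?sqr_ge0 ?subr_ge0.
rewrite ler_norml; apply/andP; split; nra.
Qed.

Lemma bnd3 (R : realType) (a u v : R) : 0 <= a -> a <= 1 -> `|(1 - a) * u * v| <= u ^+ 2 + v ^+ 2.
Proof.
move=> a0 a1.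
have h1 : 0 <= a * (u - v) ^+ 2 by rewrite mulr_ge0 ?sqr_ge0.
have h2 : 0 <= a * (u + v) ^+ 2 by rewrite mulr_ge0 ?sqr_ge0.
have h3 : 0 <= (1 - a) * u ^+ 2 by rewrite mulr_ge0 ?sqr_ge0 ?subr_ge0.
have h4 : 0 <= (1 - a) * v ^+ 2 by rewrite mulr_ge0 ?sqr_ge0 ?subr_ge0.
have h5 : 0 <= (1 - a) * (u - v) ^+ 2 by rewrite mulr_ge0 ?sqr_ge0 ?subr_ge0.
have h6 : 0 <= (1 - a) * (u + v) ^+ 2 by rewrite mulr_ge0 ?sqr_ge0 ?subr_ge0.
rewrite ler_norml; apply/andP; split; nra.
Qed.

Section main.
Context d (E : measurableType d) (R : realType) (mu : probability E R)
  (xi psi : E -> E) (phi : R -> R) (h1 h2 : E -> R).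
Hypotheses (mxi : measurable_fun setT xi) (xixi : forall z, xi (xi z) = z)
  (muxi : forall A, measurable A -> mu (xi @^-1` A) = mu A)
  (mpsi : measurable_fun setT psi)
  (H5 : forall z, psi (xi (psi (xi z))) = z)
  (H6 : forall z, xi (psi (xi (psi z))) = z)
  (phi01 : forall x, 0 <= x -> 0 <= phi x <= 1)
  (phiinv : forall x, 0 < x -> x * phi x^-1 = phi x)
  (phi0 : phi 0 = 0)
  (mphi : measurable_fun [set x : R | 0 <= x] phi)
  (dh1 : is_RN_density mu (nu_sum mu xi psi) h1)
  (dh2 : is_RN_density (pushforward mu (xi \o psi)) (nu_sum mu xi psi) h2).

Let T := xi \o psi.
Let mT : measurable_fun setT T. Proof. exact: measurableT_comp. Qed.
Let TT z : T (T z) = z. Proof. exact: H6. Qed.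
Let TTD (D : set E) : T @^-1` (T @^-1` D) = D.
Proof. by apply/seteqP; split => x /=; rewrite TT. Qed.
Let muT := measure_function_pushforward__canonical__measure_function_Measure mu mT.
Let nuM := measure_add mu muT.
Let nuE : nu_sum mu xi psi = nuM.
Proof. by apply: funext => A; rewrite /nuM measure_addE. Qed.
Let nuT : pushforward nuM T = nuM.
Proof.
apply: funext => A; rewrite /pushforward /nuM !measure_addE /= /pushforward TTD.
by rewrite addeC.
Qed.

Let r := ratio_r h1 h2.
Let mh1 : measurable_fun setT h1. Proof. by case: dh1. Qed.
Let mh2 : measurable_fun setT h2. Proof. by case: dh2. Qed.
Let h1ge0 x : 0 <= h1 x. Proof. by case: dh1 => _ []. Qed.
Let h2ge0 x : 0 <= h2 x. Proof. by case: dh2 => _ []. Qed.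
Let h1int A : measurable A -> mu A = (\int[nuM]_(x in A) (h1 x)%:E)%E.
Proof. by case: dh1 => _ [_ h]; rewrite -nuE; apply: h. Qed.
Let h2int A : measurable A -> muT A = (\int[nuM]_(x in A) (h2 x)%:E)%E.
Proof. by case: dh2 => _ [_ h]; rewrite -nuE; apply: h. Qed.

Let rE x : r x = h2 x / h1 x.
Proof.
rewrite /r /ratio_r; case: ifPn => // /nandP[|]; rewrite -leNgt => h.
  have -> : h2 x = 0 by apply/le_anti; rewrite h h2ge0.
  by rewrite mul0r.
have -> : h1 x = 0 by apply/le_anti; rewrite h h1ge0.
by rewrite invr0 mulr0.
Qed.

Let r_ge0 x : 0 <= r x.
Proof. by rewrite rE divr_ge0. Qed.

Let mr : measurable_fun setT r.
Proof.
have -> : r = fun x => h2 x * (h1 x)^-1 by apply: funext => x; rewrite rE.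
apply: measurable_funM => //; exact: measurableT_comp (measurable_invR R) mh1.
Qed.

Let ma : measurable_fun setT (fun x => phi (r x)).
Proof.
apply: (@measurable_comp _ _ _ _ _ _ [set x : R | 0 <= x]) => //.
- have -> : [set x : R | 0 <= x] = `[0, +oo[%classic.
    by apply/seteqP; split => x /=; rewrite in_itv /= andbT.
  exact: measurable_itv.
- by move=> _ [x _ <-]; exact: r_ge0.
Qed.


Local Open Scope ereal_scope.

Let mpre (D : set E) : measurable D -> measurable (T @^-1` D).
Proof. by move=> mD; rewrite -[X in measurable X]setTI; exact: mT. Qed.

Let intT (f : E -> \bar R) (D : set E) : measurable D -> measurable_fun setT f ->
  (forall x, 0 <= f x) ->
  \int[nuM]_(x in T @^-1` D) f (T x) = \int[nuM]_(x in D) f x.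
Proof.
move=> mD mf f0.
have h := @ge0_integral_pushforward _ _ _ _ _ _ mT nuM (T @^-1` D) (f \o T) (mpre _ mD)
  (measurable_funTS (measurableT_comp mf mT)) (fun y _ => f0 (T y)).
rewrite nuT TTD in h; rewrite h.
by apply: eq_integral => x _ /=; rewrite TT.
Qed.

Let ae1 : ae_eq nuM setT (EFin \o h2) (EFin \o (h1 \o T)).
Proof.
apply: integral_ae_eq => //.
- apply/integrableP; split; first exact/measurable_EFinP.
  under eq_integral do rewrite gee0_abs ?lee_fin//.
  by rewrite -h2int // /= /pushforward preimage_setT probability_setT ltry.
- exact/measurable_EFinP/measurableT_comp.
- move=> S _ mS; rewrite -h2int //.
  rewrite -[in RHS](TTD S) (intT (EFin \o h1));
    [|exact: mpre|exact/measurable_EFinP|by move=> x /=; rewrite lee_fin].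
  by rewrite -h1int //; exact: mpre.
Qed.

Let ae2 : ae_eq nuM setT (EFin \o h1) (EFin \o (h2 \o T)).
Proof.
apply: integral_ae_eq => //.
- apply/integrableP; split; first exact/measurable_EFinP.
  under eq_integral do rewrite gee0_abs ?lee_fin//.
  by rewrite -h1int // probability_setT ltry.
- exact/measurable_EFinP/measurableT_comp.
- move=> S _ mS; rewrite -h1int //.
  rewrite -[in RHS](TTD S) (intT (EFin \o h2));
    [|exact: mpre|exact/measurable_EFinP|by move=> x /=; rewrite lee_fin].
  by rewrite -h2int /= /pushforward ?TTD //; exact: mpre.
Qed.

Let aekey : ae_eq nuM setT (fun x => (phi (r x) * h1 x)%:E)
  (fun x => (phi (r (T x)) * h2 x)%:E).
Proof.
move: ae1 ae2; apply: filterS2 => x /= e1 e2 _.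
case: (e1 I) => {}e1; case: (e2 I) => {}e2.
rewrite /r /ratio_r -e1 -e2; congr EFin; exact: phi_alg.
Qed.

Let a0 x : (0 <= phi (r x))%R. Proof. by case/andP: (phi01 _ (r_ge0 x)). Qed.
Let a1 x : (phi (r x) <= 1)%R. Proof. by case/andP: (phi01 _ (r_ge0 x)). Qed.

Let keyA (F : E -> \bar R) : measurable_fun setT F -> (forall x, 0 <= F x) ->
  \int[mu]_x ((phi (r x))%:E * F x) = \int[mu]_x ((phi (r x))%:E * F (T x)).
Proof.
move=> mF F0.
have mA : measurable_fun setT (fun x => (phi (r x))%:E) by exact/measurable_EFinP.
transitivity (\int[pushforward mu T]_x ((phi (r (T x)))%:E * F x)); last first.
  rewrite (ge0_integral_pushforward mT).
  - by rewrite preimage_setT; apply: eq_integral => x _ /=; rewrite TT.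
  - by [].
  - apply: emeasurable_funM => //; apply/measurable_EFinP; exact: (measurableT_comp ma mT).
  - by move=> y _; rewrite mule_ge0 ?lee_fin.
rewrite -(@density_cov _ _ _ _ _ _ mh1 h1ge0 h1int) //; last first.
  - exact: emeasurable_funM.
  - by move=> x; rewrite mule_ge0 ?lee_fin.
rewrite -(@density_cov _ _ _ _ _ _ mh2 h2ge0 h2int) //; last first.
  - apply: emeasurable_funM => //; apply/measurable_EFinP; exact: (measurableT_comp ma mT).
  - by move=> x; rewrite mule_ge0 ?lee_fin.
apply: ge0_ae_eq_integral => //.
- apply: emeasurable_funM; [exact: emeasurable_funM|exact/measurable_EFinP].
- apply: emeasurable_funM; last exact/measurable_EFinP.
  apply: emeasurable_funM => //; apply/measurable_EFinP; exact: (measurableT_comp ma mT).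
- by move=> x _; rewrite !mule_ge0 ?lee_fin.
- by move=> x _; rewrite !mule_ge0 ?lee_fin.
move: aekey; apply: filterS => x /= e _.
by rewrite [LHS]muleAC -EFinM [RHS]muleAC -EFinM (e I).
Qed.

Let keyB (F : E -> R) : measurable_fun setT F ->
  \int[mu]_x ((phi (r x) * F x)%:E) = \int[mu]_x ((phi (r x) * F (T x))%:E).
Proof.
move=> mF; rewrite integralE [in RHS]integralE.
have mFE : measurable_fun setT (EFin \o F) by exact/measurable_EFinP.
congr (_ - _).
- transitivity (\int[mu]_x ((phi (r x))%:E * (EFin \o F)^\+ x)).
    by apply: eq_integral => x _; rewrite !funeposE /= maxeM.
  rewrite keyA; [|exact: measurable_funepos|by move=> x; exact: funepos_ge0].
  by apply: eq_integral => x _; rewrite !funeposE /= maxeM.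
- transitivity (\int[mu]_x ((phi (r x))%:E * (EFin \o F)^\- x)).
    by apply: eq_integral => x _; rewrite !funenegE /= maxeNM.
  rewrite keyA; [|exact: measurable_funeneg|by move=> x; exact: funeneg_ge0].
  by apply: eq_integral => x _; rewrite !funenegE /= maxeNM.
Qed.

Let muxiM := measure_function_pushforward__canonical__measure_function_Measure mu mxi.

Let intxi0 (H : E -> \bar R) : measurable_fun setT H -> (forall x, 0 <= H x) ->
  \int[mu]_x H x = \int[mu]_x H (xi x).
Proof.
move=> mH H0; rewrite (eq_measure_integral muxiM); last first.
  by move=> A mA _; rewrite /= /pushforward muxi.
by rewrite (ge0_integral_pushforward mxi).
Qed.

Let intxi (G : E -> \bar R) : measurable_fun setT G ->
  \int[mu]_x G x = \int[mu]_x G (xi x).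
Proof.
move=> mG; rewrite integralE [in RHS]integralE.
rewrite (intxi0 _ (measurable_funepos mG) (funepos_ge0 _)).
rewrite (intxi0 _ (measurable_funeneg mG) (funeneg_ge0 _)).
by congr (_ - _); apply: eq_integral => x _; rewrite ?funeposE ?funenegE.
Qed.

Local Close Scope ereal_scope.
Let psiT x : psi (T x) = xi x.
Proof. by have := H5 (xi x); rewrite xixi. Qed.

Let int_nonneg (H : E -> R) : measurable_fun setT H -> (forall x, 0 <= H x)%R ->
  (\int[mu]_x (H x)%:E < +oo)%E -> mu.-integrable setT (EFin \o H).
Proof.
move=> mH H0 h; apply/integrableP; split; first exact/measurable_EFinP.
rewrite (eq_integral (fun x => (H x)%:E)) // => x _.
by rewrite /comp abse_EFin ger0_norm.
Qed.

Let sqfin (f : E -> R) : L2 mu f -> (\int[mu]_x ((f x)^+2)%:E < +oo)%E.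
Proof.
case=> mf /integrableP [_].
rewrite (eq_integral (fun x => ((f x)^+2)%:E)) // => x _.
by rewrite abse_EFin ger0_norm ?sqr_ge0.
Qed.

Let msq (f : E -> R) : measurable_fun setT f ->
  measurable_fun setT (fun x => (f x)^+2).
Proof. by move=> mf; apply: measurable_funM. Qed.

Let sqxi_fin (f : E -> R) : L2 mu f -> (\int[mu]_x ((f (xi x))^+2)%:E < +oo)%E.
Proof.
move=> Lf; have [mf _] := Lf.
rewrite -(intxi (fun x => ((f x)^+2)%:E)); first exact: sqfin.
exact/measurable_EFinP/msq.
Qed.

Let sqxi (f : E -> R) : L2 mu f -> mu.-integrable setT (EFin \o (fun x => (f (xi x))^+2)).
Proof.
move=> Lf; have [mf _] := Lf; apply: int_nonneg.
- exact/msq/measurableT_comp.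
- by move=> x; rewrite sqr_ge0.
- exact: sqxi_fin.
Qed.

Let sqL2 (f : E -> R) : L2 mu f -> mu.-integrable setT (EFin \o (fun x => (f x)^+2)).
Proof. by case. Qed.

Let sq_a_psi (f : E -> R) : L2 mu f ->
  mu.-integrable setT (EFin \o (fun x => phi (r x) * (f (psi x))^+2)).
Proof.
move=> Lf; have [mf _] := Lf; apply: int_nonneg.
- by apply: measurable_funM => //; exact/msq/measurableT_comp.
- by move=> x; rewrite mulr_ge0 ?sqr_ge0.
rewrite (keyB (fun x => (f (psi x))^+2)); last exact/msq/measurableT_comp.
have := sqxi_fin _ Lf; apply: le_lt_trans.
apply: ge0_le_integral => //.
- by move=> x _; rewrite lee_fin mulr_ge0 ?sqr_ge0.
- apply/measurable_EFinP; apply: measurable_funM => //.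
  exact/msq/(measurableT_comp mf)/(measurableT_comp mpsi mT).
- exact/measurable_EFinP/msq/measurableT_comp.
- by move=> x _; rewrite psiT lee_fin ler_piMl ?sqr_ge0.
Qed.

Let sq_a_T (g : E -> R) : L2 mu g ->
  mu.-integrable setT (EFin \o (fun x => phi (r x) * (g (T x))^+2)).
Proof.
move=> Lg; have [mg _] := Lg; apply: int_nonneg.
- by apply: measurable_funM => //; exact/msq/measurableT_comp.
- by move=> x; rewrite mulr_ge0 ?sqr_ge0.
rewrite -(keyB (fun x => (g x)^+2)); last exact/msq.
have := sqfin _ Lg; apply: le_lt_trans.
apply: ge0_le_integral => //.
- by move=> x _; rewrite lee_fin mulr_ge0 ?sqr_ge0.
- by apply/measurable_EFinP; apply: measurable_funM => //; exact/msq.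
- exact/measurable_EFinP/msq.
- by move=> x _; rewrite lee_fin ler_piMl ?sqr_ge0.
Qed.

Let dom_int (w A B : E -> R) : measurable_fun setT w ->
  mu.-integrable setT (EFin \o A) -> mu.-integrable setT (EFin \o B) ->
  (forall x, `|w x| <= A x + B x)%R -> mu.-integrable setT (EFin \o w).
Proof.
move=> mw iA iB hw.
apply: (le_integrable measurableT _ _ (integrableD measurableT iA iB)).
- exact/measurable_EFinP.
- move=> x _ /=; rewrite lee_fin; exact: le_trans (hw x) (ler_norm _).
Qed.

Lemma rev_main : muQ_reversible mu (kernelP phi r psi xi) (Qop xi).
Proof.
move=> f g Lf Lg; have [mf _] := Lf; have [mg _] := Lg.
rewrite /inner /kernelP /Qop /=.
pose w1 x := phi (r x) * f (psi x) * g x.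
pose w2 x := (1 - phi (r x)) * f (xi x) * g x.
pose w3 x := phi (r x) * f (xi x) * g (T x).
have mfpsi : measurable_fun setT (fun x => f (psi x)) by exact: measurableT_comp.
have mfxi : measurable_fun setT (fun x => f (xi x)) by exact: measurableT_comp.
have mgT : measurable_fun setT (fun x => g (T x)) by exact: measurableT_comp.
have I1 : mu.-integrable setT (EFin \o w1).
  apply: (dom_int _ _ _ _ (sq_a_psi _ Lf) (sqL2 _ Lg)).
  - by apply: measurable_funM => //; apply: measurable_funM.
  - by move=> x; exact: bnd1.
have I2 : mu.-integrable setT (EFin \o w2).
  apply: (dom_int _ _ _ _ (sqxi _ Lf) (sqL2 _ Lg)).
  - apply: measurable_funM => //; apply: measurable_funM => //.
    by apply: measurable_funB => //; exact: measurable_cst.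
  - by move=> x; exact: bnd3.
have I3 : mu.-integrable setT (EFin \o w3).
  apply: (dom_int _ _ _ _ (sqxi _ Lf) (sq_a_T _ Lg)).
  - by apply: measurable_funM => //; apply: measurable_funM.
  - by move=> x; exact: bnd2.
transitivity (\int[mu]_x ((EFin \o w1) x + (EFin \o w2) x))%E.
  by apply: eq_integral => x _; rewrite /w1 /w2 /= -EFinD mulrDl.
rewrite (integralD measurableT I1 I2).
transitivity (\int[mu]_x ((EFin \o w3) x + (EFin \o w2) x))%E; last first.
  rewrite (intxi (fun x => ((EFin \o w3) x + (EFin \o w2) x)%E)); last first.
    by apply: emeasurable_funD; [exact: (measurable_int _ I3)|exact: (measurable_int _ I2)].
  apply: eq_integral => x _; rewrite /w2 /w3 /T /= -EFinD !xixi.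
  congr EFin; ring.
rewrite (integralD measurableT I3 I2); congr (_ + _)%E.
transitivity (\int[mu]_x ((phi (r x) * (f (psi x) * g x))%:E))%E.
  by apply: eq_integral => x _; rewrite /w1 /= mulrA.
rewrite keyB; last exact: measurable_funM.
by apply: eq_integral => x _; rewrite /w3 /= psiT mulrA.
Qed.

End main.

Theorem proposition3p5 (d : measure_display) (E : measurableType d)
  (R : realType) (mu : probability E R) (xi psi : E -> E) (phi : R -> R)
  (h1 h2 : E -> R) :
  measurable_fun setT xi ->
  (forall z, xi (xi z) = z) ->
  (forall A, measurable A -> mu (xi @^-1` A) = mu A) ->
  measurable_fun setT psi ->
  (forall z, psi (xi (psi (xi z))) = z) ->
  (forall z, xi (psi (xi (psi z))) = z) ->
  (forall x, 0 <= x -> 0 <= phi x <= 1) ->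
  (forall x, 0 < x -> x * phi x^-1 = phi x) ->
  phi 0 = 0 ->
  measurable_fun [set x : R | 0 <= x] phi ->
  is_RN_density mu (nu_sum mu xi psi) h1 ->
  is_RN_density (pushforward mu (xi \o psi)) (nu_sum mu xi psi) h2 ->
  muQ_reversible mu (kernelP phi (ratio_r h1 h2) psi xi) (Qop xi).
Proof.
move=> mxi xixi muxi mpsi H5 H6 phi01 phiinv phi0 mphi dh1 dh2.
exact: (@rev_main d E R mu xi psi phi h1 h2 mxi xixi muxi mpsi H5 H6 phi01 phiinv phi0 mphi dh1 dh2).
Qed.
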